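(* Let $n\ge4$ and let $h=\prod_{x}L_{x,i_{n-1}}$, where $x$ runs over a set of representatives of $Q_{n-2}/\{1,-1\}$ (the factors commute and do not depend on the choice of representatives). Then $h(z)=z$ for all $z\in Q_{n-1}$ and $h(z)=-z$ for all $z\in Q_n\setminus Q_{n-1}$; i.e. $h=\prod(z,-z)$ over representatives $z$ of $(Q_n\setminus Q_{n-1})/\{1,-1\}$.
   Context: Cayley--Dickson loops: $Q_0=\{1,-1\}\subset\mathbb{R}$ with conjugation $x^*=x$. For $n\ge1$, $Q_n=\{(x,0),(x,1)\mid x\in Q_{n-1}\}$ with multiplication $(x,0)(y,0)=(xy,0)$, $(x,0)(y,1)=(yx,1)$, $(x,1)(y,0)=(xy^*,1)$, $(x,1)(y,1)=(-y^*x,0)$ and conjugation $(x,0)^*=(x^*,0)$, $(x,1)^*=(-x,1)$, where $-(x,a)=(-x,a)$. $Q_n$ is a loop with neutral element $1=(1,0,\dots,0)$; $-x=(-1)x$. $Q_{n-1}$ is identified with the subloop $\{(x,0)\}\subset Q_n$, so $Q_{n-2}\subset Q_{n-1}\subset Q_n$. Canonical generators: $i_n=(1_{Q_{n-1}},1)\in Q_n$, and $i_1,\dots,i_{n-1}$ are the canonical generators of $Q_{n-1}\subset Q_n$. $L_x(a)=xa$, $L_{x,y}=L_{yx}^{-1}L_yL_x$. *)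

(* Defs.v *)
From HB Require Import structures.
From mathcomp Require Import all_boot.
Set Implicit Arguments. Unset Strict Implicit. Unset Printing Implicit Defensive.

(* Carrier of Q_n: Q_0 = bool (false = 1, true = -1);
   Q_{n+1} = Q_n * bool, the pair (x, a) with a : bool as in the paper. *)
Fixpoint Qt (n : nat) : finType :=
  match n with
  | 0 => (bool : finType)
  | m.+1 => ((Qt m * bool)%type : finType)
  end.

Fixpoint Qone (n : nat) : Qt n :=
  match n return Qt n with
  | 0 => false
  | m.+1 => (Qone m, false)
  end.

Fixpoint Qneg (n : nat) : Qt n -> Qt n :=
  match n return Qt n -> Qt n with
  | 0 => fun x => ~~ x
  | m.+1 => fun x => (Qneg x.1, x.2)
  end.

Fixpoint Qconj (n : nat) : Qt n -> Qt n :=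
  match n return Qt n -> Qt n with
  | 0 => fun x => x
  | m.+1 => fun x => if x.2 then (Qneg x.1, true) else (Qconj x.1, false)
  end.

Fixpoint Qmul (n : nat) : Qt n -> Qt n -> Qt n :=
  match n return Qt n -> Qt n -> Qt n with
  | 0 => fun a b => xorb a b
  | m.+1 => fun u v =>
      let x := u.1 in let y := v.1 in
      match u.2, v.2 with
      | false, false => (Qmul x y, false)
      | false, true  => (Qmul y x, true)
      | true,  false => (Qmul x (Qconj y), true)
      | true,  true  => (Qneg (Qmul (Qconj y) x), false)
      end
  end.

Definition Qemb (n : nat) (x : Qt n) : Qt n.+1 := (x, false).

(* canonical generator i_{n+1} = (1_{Q_n}, 1) of Q_{n+1} *)
Definition Qgen (n : nat) : Qt n.+1 := (Qone n, true).

(* left translation L_a and its inverse L_a^{-1} (left division; since Q_n is a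
   loop, the c with a c = b is unique) *)
Definition QL (n : nat) (a : Qt n) : Qt n -> Qt n := Qmul a.
Definition QLinv (n : nat) (a : Qt n) (b : Qt n) : Qt n :=
  odflt b [pick c : Qt n | Qmul a c == b].

Definition QLxy (n : nat) (x y : Qt n) : Qt n -> Qt n :=
  fun z => QLinv (Qmul y x) (QL y (QL x z)).

Definition is_rep_list (m : nat) (s : seq (Qt m)) : Prop :=
  uniq s /\ forall x : Qt m, (x \in s) = ~~ (Qneg x \in s).

(* the factor L_{x, i_{n-1}} acting on Q_n, n = m+2, for x in Q_{n-2} *)
Definition hfactor (m : nat) (x : Qt m) : Qt m.+2 -> Qt m.+2 :=
  QLxy (Qemb (Qemb x)) (Qemb (Qgen m)).

Definition hprod (m : nat) (s : seq (Qt m)) : Qt m.+2 -> Qt m.+2 :=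
  foldr (fun x f => hfactor x \o f) id s.

(* Main.v *)
Require Import Defs.
From mathcomp Require Import all_boot.
Set Implicit Arguments. Unset Strict Implicit.

Lemma negK n (x : Qt n) : Qneg (Qneg x) = x.
Proof. elim: n x => [|n IH] /= x; first by case: x. by case: x => u a /=; rewrite IH. Qed.

Lemma neg_neq n (x : Qt n) : (Qneg x == x) = false.
Proof. elim: n x => [|n IH] /= x; first by case: x. case: x => u a /=; by rewrite xpair_eqE IH. Qed.

Lemma conjK n (x : Qt n) : Qconj (Qconj x) = x.
Proof. elim: n x => [|n IH] /= x; first by []. case: x => u [] /=; by rewrite ?IH ?negK. Qed.

Lemma conjN n (x : Qt n) : Qconj (Qneg x) = Qneg (Qconj x).
Proof. elim: n x => [|n IH] /= x; first by []. case: x => u [] /=; by rewrite ?IH. Qed.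

Lemma mulN n (x y : Qt n) : Qmul (Qneg x) y = Qneg (Qmul x y) /\ Qmul x (Qneg y) = Qneg (Qmul x y).
Proof.
elim: n x y => [|n IH] /= x y; first by case: x; case: y.
case: x => u [] ; case: y => v [] /=; by rewrite ?conjN ?(proj1 (IH _ _)) ?(proj2 (IH _ _)).
Qed.
Lemma mulNl n (x y : Qt n) : Qmul (Qneg x) y = Qneg (Qmul x y). Proof. exact: (proj1 (mulN _ _)). Qed.
Lemma mulNr n (x y : Qt n) : Qmul x (Qneg y) = Qneg (Qmul x y). Proof. exact: (proj2 (mulN _ _)). Qed.

Lemma conjM n (x y : Qt n) : Qconj (Qmul x y) = Qmul (Qconj y) (Qconj x).
Proof.
elim: n x y => [|n IH] /= x y; first by case: x; case: y.
case: x => u [] ; case: y => v [] /=; by rewrite ?conjN ?IH ?mulNl ?mulNr ?negK ?conjK.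
Qed.

Lemma conj1 n : Qconj (Qone n) = Qone n.
Proof. by elim: n => [|n IH] //=; rewrite IH. Qed.

Lemma mul1 n (x : Qt n) : Qmul (Qone n) x = x /\ Qmul x (Qone n) = x.
Proof.
elim: n x => [|n IH] /= x; first by case: x.
case: x => u [] /=; by rewrite ?conj1 ?(proj1 (IH _)) ?(proj2 (IH _)).
Qed.
Lemma mul1l n (x : Qt n) : Qmul (Qone n) x = x. Proof. exact: (proj1 (mul1 _)). Qed.
Lemma mul1r n (x : Qt n) : Qmul x (Qone n) = x. Proof. exact: (proj2 (mul1 _)). Qed.

Lemma Qinv n (a c : Qt n) : Qmul (Qconj a) (Qmul a c) = c /\ Qmul (Qmul c a) (Qconj a) = c.
Proof.
elim: n a c => [|n IH] /= a c; first by case: a; case: c.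
have L1 : forall a c : Qt n, Qmul (Qconj a) (Qmul a c) = c by move=> *; apply IH.
have R1 : forall a c : Qt n, Qmul (Qmul c a) (Qconj a) = c by move=> *; apply IH.
have L2 : forall a c : Qt n, Qmul a (Qmul (Qconj a) c) = c by move=> a' c'; rewrite -{1}(conjK a') L1.
have R2 : forall a c : Qt n, Qmul (Qmul c (Qconj a)) a = c by move=> a' c'; rewrite -{2}(conjK a') R1.
case: a => u [] ; case: c => v [] /=;
  by rewrite ?conjN ?conjM ?conjK ?mulNl ?mulNr ?negK ?L1 ?R1 ?L2 ?R2.
Qed.


Definition isreal n (x : Qt n) := (x == Qone n) || (x == Qneg (Qone n)).

Lemma isreal_pair n (u : Qt n) a : isreal ((u, a) : Qt n.+1) = ~~ a && isreal u.
Proof. by rewrite /isreal /= !xpair_eqE; case: a; rewrite ?andbF ?andbT. Qed.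

Lemma conjE n (x : Qt n) : Qconj x = if isreal x then x else Qneg x.
Proof.
elim: n x => [|n IH] x; first by case: x.
case: x => u [] /=; rewrite isreal_pair //= IH; by case: (isreal u).
Qed.

Lemma negI n (x y : Qt n) : (Qneg x == Qneg y) = (x == y).
Proof. apply/eqP/eqP => [H|->] //; by rewrite -(negK x) H negK. Qed.

Lemma neg_neq' n (x : Qt n) : (x == Qneg x) = false.
Proof. by rewrite eq_sym neg_neq. Qed.

Lemma swapc n (u v : Qt n) : Qmul (Qconj u) v = Qconj (Qmul (Qconj v) u).
Proof. by rewrite conjM conjK. Qed.

Lemma comm_or n (x y : Qt n) : Qmul x y = Qmul y x \/ Qmul x y = Qneg (Qmul y x).
Proof.
elim: n x y => [|n IH] x y; first by left; case: x; case: y.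
case: x => u [] ; case: y => v [] /=.
- rewrite (swapc u) [Qconj (Qmul _ _)]conjE; case: (isreal _); rewrite ?negK; by [left|right].
- rewrite (conjE v); case: (isreal v); rewrite ?mulNr; by [left|right].
- rewrite (conjE u); case: (isreal u); rewrite ?mulNr ?negK; by [left|right].
- by case: (IH u v) => ->; [left|right].
Qed.

Lemma mulyy n (y : Qt n) : Qmul (Qconj y) y = Qone n.
Proof. by rewrite -{2}(mul1r y) (proj1 (Qinv _ _)). Qed.

Lemma isreal_div n (u v : Qt n) : isreal (Qmul (Qconj v) u) = (u == v) || (u == Qneg v).
Proof.
apply/idP/idP.
  rewrite /isreal => /orP[] /eqP E.
    by rewrite -(proj1 (Qinv (Qconj v) u)) conjK E mul1r eqxx.
  by rewrite -(proj1 (Qinv (Qconj v) u)) conjK E mulNr mul1r eqxx orbT.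
by case/orP=> /eqP ->; rewrite /isreal ?mulNr mulyy eqxx ?orbT.
Qed.

Lemma commE n (x y : Qt n) :
  (Qmul x y == Qmul y x) = [|| isreal x, isreal y, x == y | x == Qneg y].
Proof.
elim: n x y => [|n IH] x y; first by case: x; case: y.
case: x => u [] ; case: y => v [] /=; rewrite !isreal_pair /= ?xpair_eqE /= ?andbT ?andbF //.
- rewrite negI (swapc u) [Qconj (Qmul _ _)]conjE isreal_div.
  case: ifP => _; first by rewrite eqxx.
  by rewrite neg_neq'.
- rewrite !orbF (conjE v); case: (isreal v); rewrite ?eqxx // mulNr. by rewrite eq_sym neg_neq'.
- rewrite !orbF (conjE u); case: (isreal u); rewrite ?eqxx // mulNr. by rewrite neg_neq'.
Qed.


Lemma QLinvE n (a b c : Qt n) : Qmul a c = b -> QLinv a b = c.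
Proof.
move=> H; rewrite /QLinv; case: pickP => [c' /eqP H'|H'] /=; last by move: (H' c); rewrite H eqxx.
by rewrite -(proj1 (Qinv a c')) H' -H (proj1 (Qinv a c)).
Qed.

Definition comm n (x y : Qt n) := Qmul x y == Qmul y x.

Lemma mulC_sign n (x y : Qt n) : Qmul x y = if comm x y then Qmul y x else Qneg (Qmul y x).
Proof. rewrite /comm; case: (comm_or x y) => E; rewrite E ?eqxx // neg_neq // negK. Qed.

Lemma commNl n (a b : Qt n) : comm (Qneg a) b = comm a b.
Proof. by rewrite /comm mulNl mulNr negI. Qed.
Lemma commC n (a b : Qt n) : comm a b = comm b a.
Proof. by rewrite /comm eq_sym. Qed.
Lemma commNr n (a b : Qt n) : comm a (Qneg b) = comm a b.
Proof. by rewrite commC commNl commC. Qed.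
Lemma comm_conjl n (a b : Qt n) : comm (Qconj a) b = comm a b.
Proof. by rewrite conjE; case: ifP; rewrite ?commNl. Qed.
Lemma comm_conjr n (a b : Qt n) : comm a (Qconj b) = comm a b.
Proof. by rewrite commC comm_conjl commC. Qed.
Lemma comm_real n (a b : Qt n) : isreal a -> comm a b.
Proof. by rewrite /comm commE => ->. Qed.

Definition sgn m (x : Qt m) (z : Qt m.+2) :=
  if z.2 then ~~ isreal x && comm x z.1.1 else ~~ comm x z.1.1.

Lemma hfactorE m (x : Qt m) (z : Qt m.+2) : hfactor x z = if sgn x z then Qneg z else z.
Proof.
rewrite /hfactor /QLxy /QL; apply: QLinvE.
rewrite (fun_if (Qmul _)) mulNr.
suff -> : Qmul (Qmul (Qemb (Qgen m)) (Qemb (Qemb x))) z =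
   (if sgn x z then Qneg (Qmul (Qemb (Qgen m)) (Qmul (Qemb (Qemb x)) z))
    else Qmul (Qemb (Qgen m)) (Qmul (Qemb (Qemb x)) z)) by case: (sgn x z); rewrite ?negK.
case: z => [[w a] b]; rewrite /sgn /=.
case: a; case: b => /=; rewrite ?conj1 ?mul1l ?mul1r ?conjK.
- rewrite (conjE x); case Hx: (isreal x) => /=.
    by rewrite (mulC_sign x w) comm_real.
  by rewrite mulNr negK (mulC_sign x w); case: (comm x w); rewrite ?negK.
- by rewrite conjM (mulC_sign (Qconj w)) comm_conjl comm_conjr commC; case: (comm x w); rewrite ?negK.
- rewrite (conjE x); case Hx: (isreal x) => /=.
    by rewrite (mulC_sign x w) comm_real.
  by rewrite mulNl (mulC_sign x w); case: (comm x w); rewrite ?negK.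
- by rewrite conjM (mulC_sign (Qconj x)) comm_conjl comm_conjr; case: (comm x w).
Qed.


Lemma sgnN m (x : Qt m) (z : Qt m.+2) : sgn x (Qneg z) = sgn x z.
Proof. by case: z => [[w a] b]; rewrite /sgn /= commNr. Qed.

Lemma hprodE m (s : seq (Qt m)) z :
  hprod s z = if odd (count (fun x => sgn x z) s) then Qneg z else z.
Proof.
elim: s => [|x s IH] //=; rewrite hfactorE IH.
rewrite oddD; case: (odd (count _ s)); rewrite ?sgnN; case: (sgn x z) => /=; rewrite ?negK //; case: z {IH} => [[? ?] ?] /=; by rewrite ?negK.
Qed.

Lemma cardQ m : #|Qt m| = 2 ^ m.+1.
Proof. elim: m => [|m IH]; first by rewrite card_bool. rewrite expnS -IH -(card_bool) mulnC -card_prod. by []. Qed.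
Lemma negI' n : injective (@Qneg n). Proof. exact: (can_inj (@negK n)). Qed.

Lemma size_rep m (s : seq (Qt m)) : is_rep_list s -> 2 * size s = 2 ^ m.+1.
Proof.
case=> us hs; rewrite -cardQ -(cardC (mem s)).
have -> : #|[predC s]| = #|map (@Qneg m) s|.
  apply: eq_card => x; rewrite !inE -{2}(negK x) (mem_map (@negI' m)) hs negbK //.
by rewrite (card_uniqP us) (card_uniqP _) ?size_map ?addnn ?mul2n // (map_inj_uniq (@negI' m)).
Qed.

Lemma count_pm m (s : seq (Qt m)) a : is_rep_list s ->
  count (fun x => (x == a) || (x == Qneg a)) s = 1.
Proof.
case=> us hs.
have := count_predUI (pred1 a) (pred1 (Qneg a)) s.
rewrite (@eq_count _ (predI _ _) pred0) ?count_pred0 ?addn0; last first.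
  by move=> x /=; apply/negP=> /andP[/eqP -> ]; rewrite neg_neq'.
rewrite !count_uniq_mem // => ->.
by rewrite hs; case: (Qneg a \in s).
Qed.


Lemma isrealN n (w : Qt n) : isreal (Qneg w) = isreal w.
Proof. by rewrite /isreal -{1}(negK (Qone n)) !negI orbC. Qed.

Lemma count_parity m (s : seq (Qt m)) (z : Qt m.+2) : 0 < m -> is_rep_list s ->
  odd (count (fun x => sgn x z) s) = z.2.
Proof.
move=> m0 hs.
have hsz : size s = 2 ^ m.
  by apply/eqP; rewrite -(eqn_pmul2l (isT : 0 < 2)) size_rep // expnS.
have cr : count (@isreal m) s = 1 by rewrite (count_pm (Qone m) hs).
case: z => [[w a] b]; rewrite /sgn /=.
have cE : forall x, comm x w = [|| isreal x, isreal w, x == w | x == Qneg w].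
  by move=> x; rewrite /comm commE.
case Hw: (isreal w).
  case: b.
    rewrite (@eq_count _ _ (predC (@isreal m))); last by move=> x; rewrite cE Hw !orbT andbT.
    have := count_predC (@isreal m) s; rewrite cr hsz => E.
    have -> : count (predC (@isreal m)) s = 2 ^ m - 1 by rewrite -E addKn.
    rewrite oddB ?oddX ?orbF; last by rewrite -E leq_addr.
    by case: m m0 {hs hsz E cr cE Hw w s}.
  by rewrite (@eq_count _ _ pred0) ?count_pred0 // => x; rewrite cE Hw orbT.
case: b.
  rewrite (@eq_count _ _ (fun x : Qt m => (x == w) || (x == Qneg w))); first by rewrite count_pm.
  move=> x /=; rewrite cE Hw /=.
  case: (boolP (isreal x)) => Hx //=.
  by apply/esym/negbTE; apply/negP => /orP[]/eqP E; move: Hx; rewrite E ?isrealN Hw.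
have cc : count (fun x => comm x w) s = 2.
  rewrite (@eq_count _ _ (predU (@isreal m) (fun x : Qt m => (x == w) || (x == Qneg w)))); last first.
    by move=> x; rewrite cE Hw.
  have := count_predUI (@isreal m) (fun x : Qt m => (x == w) || (x == Qneg w)) s.
  rewrite (@eq_count _ (predI _ _) pred0) ?count_pred0 ?addn0 ?cr ?count_pm // => x /=.
  apply/negP => /andP[Hx /orP[] /eqP E]; by move: Hx; rewrite E ?isrealN Hw.
have := count_predC (fun x => comm x w) s; rewrite cc hsz => E.
have -> : count (fun x => ~~ comm x w) s = 2 ^ m - 2 by rewrite -E addKn.
rewrite oddB ?oddX ?orbF; last by rewrite -E leq_addr.
by move: m0; rewrite lt0n => /negbTE ->.
Qed.

Theorem mainTheorem15 (m : nat) (hm : 2 <= m) :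
  (forall x y : Qt m, hfactor x \o hfactor y =1 hfactor y \o hfactor x) /\
  (forall s : seq (Qt m), is_rep_list s ->
     forall z : Qt m.+2,
       hprod s z = (if z.2 then Qneg z else z)).
Proof.
split.
  move=> x y z /=; rewrite !hfactorE.
  case Hy: (sgn y z); case Hx: (sgn x z); by rewrite ?sgnN ?Hx ?Hy ?negK.
move=> s hs z; rewrite hprodE count_parity //.
by apply: leq_trans hm.
Qed.
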